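(* The topology of any first countable paratopological group $G$ is generated by a left-invariant $\overline{\mathsf{dist}}$-continuous quasi-pseudometric; if moreover $G$ is semiregular, this quasi-pseudometric can additionally be chosen right-continuous.
   Context: A paratopological group is a group with a topology making multiplication continuous. Semiregular: every neighborhood $O_x$ of $x$ contains $\mathrm{int}\,\overline{U_x}$ for some neighborhood $U_x$ of $x$. A quasi-pseudometric is $d:G\times G\to[0,\infty)$ with $d(x,x)=0$ and the triangle inequality; left-invariant if $d(zx,zy)=d(x,y)$ for all $x,y,z$; right-continuous if $y\mapsto d(x,y)$ is continuous for each $x$; $\overline{\mathsf{dist}}$-continuous if for every non-empty $A\subset G$ the function $x\mapsto\inf\{\varepsilon>0:x\in\overline{B_d(A,\varepsilon)}\}$ is continuous, where $B_d(A,\varepsilon)=\{y:\exists a\in A\ d(a,y)<\varepsilon\}$. $d$ generates the topology if the balls $B_d(x,\varepsilon)=\{y:d(x,y)<\varepsilon\}$ form a subbase of it. *)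

(* Defs.v *)
From HB Require Import structures.
From mathcomp Require Import all_boot all_order all_algebra.
From mathcomp Require Import all_classical all_reals all_analysis.
Set Implicit Arguments. Unset Strict Implicit. Unset Printing Implicit Defensive.
Import Order.TTheory GRing.Theory Num.Theory.
Import numFieldNormedType.Exports.
Local Open Scope classical_set_scope.
Local Open Scope ring_scope.

Section Defs.
Variable G : topologicalType.

Definition is_group (mul : G -> G -> G) (one : G) (inv : G -> G) : Prop :=
  (forall x y z, mul x (mul y z) = mul (mul x y) z) /\
  (forall x, mul one x = x) /\ (forall x, mul x one = x) /\
  (forall x, mul (inv x) x = one) /\ (forall x, mul x (inv x) = one).

Definition paratopological_group (mul : G -> G -> G) (one : G) (inv : G -> G) : Prop :=
  is_group mul one inv /\ continuous (fun p : G * G => mul p.1 p.2).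

Definition first_countable : Prop :=
  forall x : G, exists B : nat -> set G,
    (forall n, nbhs x (B n)) /\ (forall U, nbhs x U -> exists n, B n `<=` U).

Definition semiregular : Prop :=
  forall (x : G) (O : set G), nbhs x O ->
    exists U : set G, nbhs x U /\ interior (closure U) `<=` O.

Variable R : realType.

Definition quasi_pseudometric (d : G -> G -> R) : Prop :=
  (forall x y, 0 <= d x y) /\ (forall x, d x x = 0) /\
  (forall x y z, d x z <= d x y + d y z).

Definition left_invariant (mul : G -> G -> G) (d : G -> G -> R) : Prop :=
  forall x y z, d (mul z x) (mul z y) = d x y.

Definition qpm_right_continuous (d : G -> G -> R) : Prop :=
  forall x, continuous (fun y => d x y).

Definition qball (d : G -> G -> R) (x : G) (eps : R) : set G :=
  [set y | d x y < eps].

Definition qball_set (d : G -> G -> R) (A : set G) (eps : R) : set G :=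
  [set y | exists2 a, A a & d a y < eps].

Definition cdist (d : G -> G -> R) (A : set G) (x : G) : R :=
  inf [set eps | 0 < eps /\ closure (qball_set d A eps) x].

Definition cdist_continuous (d : G -> G -> R) : Prop :=
  forall A : set G, A !=set0 -> continuous (cdist d A).

(* the balls B_d(x, eps) (eps > 0) form a subbase of the topology of G:
   open sets are exactly the unions of finite intersections of balls *)
Definition generates_topology (d : G -> G -> R) : Prop :=
  forall A : set G, open A <->
    (forall x, A x -> exists s : seq (G * R),
       (forall p, p \in s -> 0 < p.2) /\
       (forall p, p \in s -> qball d p.1 p.2 x) /\
       (forall y, (forall p, p \in s -> qball d p.1 p.2 y) -> A y)).

End Defs.

(* Main.v *)
From HB Require Import structures.
From mathcomp Require Import all_boot all_order all_algebra.
From mathcomp Require Import all_classical all_reals all_analysis lra.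
Require Import Defs.
From Stdlib Require Import Lia.
From mathcomp Require Import zify.
Set Implicit Arguments. Unset Strict Implicit. Unset Printing Implicit Defensive.
Import Order.TTheory GRing.Theory Num.Theory.
Import numFieldNormedType.Exports.
Local Open Scope classical_set_scope.
Local Open Scope ring_scope.

Section Grp.
Variable G : topologicalType.
Variables (mul : G -> G -> G) (one : G) (inv : G -> G).
Hypothesis mulA : forall x y z, mul x (mul y z) = mul (mul x y) z.
Hypothesis mul1g : forall x, mul one x = x.
Hypothesis mulg1 : forall x, mul x one = x.
Hypothesis mulVg : forall x, mul (inv x) x = one.
Hypothesis mulgV : forall x, mul x (inv x) = one.
Hypothesis mulC : continuous (fun p : G * G => mul p.1 p.2).

Lemma mulKg x y : mul (inv x) (mul x y) = y.
Proof. by rewrite mulA mulVg mul1g. Qed.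
Lemma mulKVg x y : mul x (mul (inv x) y) = y.
Proof. by rewrite mulA mulgV mul1g. Qed.
Lemma inv1 : inv one = one.
Proof. by rewrite -[inv one]mulg1 mulVg. Qed.
Lemma invM x y : inv (mul x y) = mul (inv y) (inv x).
Proof.
have h : mul (mul x y) (mul (inv y) (inv x)) = one.
  by rewrite -mulA (mulA y) mulgV mul1g mulgV.
by rewrite -[inv (mul x y)]mulg1 -h mulA mulVg mul1g.
Qed.

Lemma contL a : continuous (mul a).
Proof.
move=> y B nB; have := @mulC (a, y) B nB.
case=> [[P Q]] /= [nP nQ] PQ.
apply: filterS nQ => z Qz; exact: (PQ (a, z) (conj (nbhs_singleton nP) Qz)).
Qed.

Lemma contR a : continuous (fun y => mul y a).
Proof.
move=> y B nB; have := @mulC (y, a) B nB.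
case=> [[P Q]] /= [nP nQ] PQ.
apply: filterS nP => z Pz; exact: (PQ (z, a) (conj Pz (nbhs_singleton nQ))).
Qed.

Lemma clos_map (h : G -> G) (S T : set G) x :
  continuous h -> closure S x -> (forall s, S s -> T (h s)) -> closure T (h x).
Proof.
move=> hc cl ST B nB.
have [s [Ss Bs]] := cl _ (hc x B nB).
by exists (h s); split; [apply: ST|].
Qed.

Lemma sq W : nbhs one W -> exists V, nbhs one V /\ forall a b, V a -> V b -> W (mul a b).
Proof.
move=> nW.
have : nbhs (one, one) [set p : G * G | W (mul p.1 p.2)].
  apply: (@mulC (one, one)); rewrite /= mulg1 //.
case=> [[P Q]] /= [nP nQ] PQ.
exists (P `&` Q); split; first exact: filterI.
by move=> a b [Pa _] [_ Qb]; apply: (PQ (a, b)).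
Qed.


Variable R : realType.

Definition dd (f : G -> R) : G -> G -> R := fun x y => f (mul (inv x) y).

Lemma inf_add (A B : set R) (c : R) :
  A !=set0 -> B !=set0 -> has_lbound A -> has_lbound B ->
  (forall a b, A a -> B b -> c <= a + b) -> c <= inf A + inf B.
Proof.
move=> A0 B0 hA hB h.
have h1 : forall b, B b -> c - b <= inf A.
  move=> b Bb; apply: lb_le_inf A0 _ => a Aa; have := h a b Aa Bb; lra.
have : c - inf A <= inf B.
  apply: lb_le_inf B0 _ => b Bb; have := h1 b Bb; lra.
lra.
Qed.

Section Prenorm.
Variable f : G -> R.
Hypothesis f0 : forall g, 0 <= f g.
Hypothesis f1 : f one = 0.
Hypothesis fadd : forall g h, f (mul g h) <= f g + f h.
Hypothesis fopen : forall e, open [set g | f g < e].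
Hypothesis fsmall : forall O, nbhs one O -> exists e, 0 < e /\ [set g | f g < e] `<=` O.

Lemma dd_qpm : quasi_pseudometric (dd f).
Proof.
split; first by move=> x y; apply: f0.
split; first by move=> x; rewrite /dd mulVg.
move=> x y z; rewrite /dd.
have -> : mul (inv x) z = mul (mul (inv x) y) (mul (inv y) z) by rewrite -mulA mulKVg.
exact: fadd.
Qed.

Lemma dd_linv : left_invariant mul (dd f).
Proof. by move=> x y z; rewrite /dd invM -mulA mulKg. Qed.

Lemma ball_open x e : open (qball (dd f) x e).
Proof.
rewrite openE => y /= hy.
have : nbhs (mul (inv x) y) [set g | f g < e].
  by apply: open_nbhs_nbhs; split; [apply: fopen|].
by move/(@contL (inv x) y _).
Qed.

Lemma dd_ball x e : 0 < e -> nbhs x (qball (dd f) x e).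
Proof.
move=> e0; apply: open_nbhs_nbhs; split; first exact: ball_open.
by rewrite /qball /dd /= mulVg f1.
Qed.

Lemma dd_gen : generates_topology (dd f).
Proof.
move=> A; split.
  rewrite openE => oA x Ax.
  have nA : nbhs x A := oA x Ax.
  have : nbhs one [set g | A (mul x g)].
    by apply: (@contL x one _); rewrite mulg1.
  move=> /fsmall [e [e0 he]].
  exists [:: (x, e)]; split; [|split].
  - by move=> p; rewrite inE => /eqP ->.
  - by move=> p; rewrite inE => /eqP -> /=; rewrite /qball /dd /= mulVg f1.
  - move=> y hy; have /= := hy (x, e); rewrite inE eqxx => /(_ isT) hxy.
    by have := he _ hxy; rewrite /= mulKVg.
move=> h; rewrite openE => x Ax.
have [s [s0 [sx sA]]] := h x Ax.
apply: (filterS sA).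
elim: s s0 sx {sA} => [|p s IH] s0 sx.
  by apply: filterS filterT => y _ p; rewrite in_nil.
have hp : nbhs x (qball (dd f) p.1 p.2).
  apply: open_nbhs_nbhs; split; first exact: ball_open.
  by apply: sx; rewrite inE eqxx.
have hs : nbhs x [set y | forall q, q \in s -> qball (dd f) q.1 q.2 y].
  apply: IH => q qs; [apply: s0|apply: sx]; by rewrite inE qs orbT.
apply: filterS (filterI hp hs) => y [yp ys] q; rewrite inE => /orP [/eqP ->|]//.
exact: ys.
Qed.

Section CD.
Variable A : set G.
Hypothesis A0 : A !=set0.
Let S y := [set e : R | 0 < e /\ closure (qball_set (dd f) A e) y].

Lemma SN y : S y !=set0.
Proof.
case: A0 => a Aa; exists (dd f a y + 1); split.
  by have := f0 (mul (inv a) y); rewrite /dd; lra.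
apply: subset_closure; exists a => //; rewrite ltrDl ltr01 //.
Qed.

Lemma SL y : has_lbound (S y).
Proof. by exists 0 => e [/ltW]. Qed.

Lemma cd_ge0 y : 0 <= cdist (dd f) A y.
Proof. by apply: lb_le_inf (SN y) _ => e [/ltW]. Qed.

Lemma qball_setS e e' : e <= e' -> qball_set (dd f) A e `<=` qball_set (dd f) A e'.
Proof. move=> ee y [a Aa h]; exists a => //; exact: lt_le_trans ee. Qed.

Lemma dd_cdist_at x : continuous_at x (cdist (dd f) A).
Proof.
apply/cvgrPdist_lt => eps eps0.
set m := cdist (dd f) A x.
have [e [e0 cle] lte] : exists2 e, S x e & e < m + eps / 2.
  by apply: inf_lt (SN x) _; lra.
have U : nbhs x [set y | cdist (dd f) A y < m + eps].
  apply: filterS (dd_ball x (_ : 0 < eps / 2)); last by lra.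
  move=> y hy.
  have Sy : S y (e + eps / 2).
    split; first lra.
    set g := mul (inv x) y.
    have := clos_map (S := qball_set (dd f) A e) (T := qball_set (dd f) A (e + eps / 2)) (@contR g) cle.
    rewrite /g mulKVg; apply => s [a Aa das]; exists a => //.
    rewrite /dd mulA; apply: le_lt_trans (fadd _ _) _.
    move: das hy; rewrite /dd /qball /=; lra.
  have := ge_inf (SL y) Sy; rewrite /=; lra.
have L : nbhs x [set y | m - eps < cdist (dd f) A y].
  case: (leP (m - eps / 2) 0) => hm.
    by apply: filterS filterT => y _ /=; have := cd_ge0 y; lra.
  set s := m - eps / 2.
  have nx : ~ closure (qball_set (dd f) A s) x.
    move=> c; have := ge_inf (SL x) (conj hm c); rewrite -/(cdist (dd f) A x) -/m /s; lra.
  have : nbhs x (~` closure (qball_set (dd f) A s)).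
    by apply: open_nbhs_nbhs; split => //; rewrite openC; apply: closed_closure.
  apply: filterS => y ny /=.
  have : s <= cdist (dd f) A y.
    apply: lb_le_inf (SN y) _ => e' [e'0 ce'].
    rewrite leNgt; apply/negP => es; apply: ny.
    exact: (closureS (qball_setS (ltW es))).
  rewrite /s; lra.
apply: filterS (filterI U L) => y [/= h1 h2].
rewrite ltr_distlC; apply/andP; split; lra.
Qed.

End CD.

Lemma dd_cdist : cdist_continuous (dd f).
Proof. move=> A A0 x; exact: dd_cdist_at. Qed.

End Prenorm.


Definition w (n : nat) : R := (2^-1) ^+ n.

Lemma w_gt0 n : 0 < w n.
Proof. by apply: exprn_gt0; rewrite invr_gt0 ltr0n. Qed.

Lemma wS n : w n.+1 = w n / 2.
Proof. by rewrite /w exprS mulrC. Qed.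

Lemma w_small (e : R) : 0 < e -> exists m, w m < e.
Proof.
move=> e0.
have ei : 0 <= e^-1 by rewrite invr_ge0 ltW.
have := archi_boundP ei; set k := Num.Def.archi_bound _ => hk.
exists k.
have h2 : (k%:R : R) < 2 ^+ k by rewrite -natrX ltr_nat ltn_expl.
rewrite /w exprVn invf_plt ?posrE ?exprn_gt0 //; exact: lt_trans hk h2.
Qed.

Lemma w_mono n m : w n <= w m.+1 -> (m < n)%N.
Proof.
move=> h; rewrite ltnNge; apply/negP => nm.
have : w m.+1 < w n.
  rewrite /w ltr_iXn2l ?invf_lt1 ?ltr1n ?invr_gt0 ?ltr0n //.
move: h; rewrite leNgt => /negP; exact.
Qed.

Fixpoint sumw (s : seq nat) : R := if s is n :: t then w n + sumw t else 0.

Lemma sumw_ge0 s : 0 <= sumw s.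
Proof. elim: s => [|n s IH] //=; have := w_gt0 n; lra. Qed.

Lemma sumw_cat s t : sumw (s ++ t) = sumw s + sumw t.
Proof. elim: s => [|n s IH] /=; [lra|rewrite IH; lra]. Qed.

Lemma sumw_gt0 s : s != [::] -> 0 < sumw s.
Proof. case: s => [|n s] //= _; have := w_gt0 n; have := sumw_ge0 s; lra. Qed.

Lemma split_seq s (c : R) : 0 <= c -> c < sumw s ->
  exists s1 n s2, [/\ s = s1 ++ n :: s2, sumw s1 <= c & c < sumw s1 + w n].
Proof.
elim: s c => [|n t IH] c c0 /=; first lra.
move=> hc; case: (ltP c (w n)) => hn.
  by exists [::], n, t; split => //=; lra.
have c1 : 0 <= c - w n by lra.
have c2 : c - w n < sumw t by lra.
have [t1 [n' [t2 [-> h1 h2]]]] := IH (c - w n) c1 c2.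
exists (n :: t1), n', t2; split => //=; lra.
Qed.

Section Kak.
Variable U : nat -> set G.
Hypothesis U0 : forall g, U 0 g.
Hypothesis Unb : forall n, nbhs one (U n).
Hypothesis Ucube : forall n a b c, U n.+1 a -> U n.+1 b -> U n.+1 c -> U n (mul a (mul b c)).
Hypothesis Usmall : forall O, nbhs one O -> exists n, U n `<=` O.

Lemma U1 n : U n one.
Proof. exact: nbhs_singleton (Unb n). Qed.

Lemma Udec n : U n.+1 `<=` U n.
Proof. by move=> a Ua; rewrite -(mulg1 a) -(mulg1 one); apply: Ucube => //; apply: U1. Qed.

Lemma Umono m n : (m <= n)%N -> U n `<=` U m.
Proof.
move/subnK => <-; elim: (n - m)%N => [|k IH] //= x hx.
by apply: IH; apply: Udec.
Qed.

Fixpoint P (s : seq nat) : set G :=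
  if s is n :: t then [set g | exists a b, [/\ U n a, P t b & g = mul a b]]
  else [set g | g = one].

Lemma P_cat s t a b : P s a -> P t b -> P (s ++ t) (mul a b).
Proof.
elim: s a => [|n s IH] a /=; first by move=> -> Pb; rewrite mul1g.
move=> [u [c [Uu Pc ->]]] Pb; exists u, (mul c b).
split; [exact: Uu|exact: IH|by rewrite mulA].
Qed.

Lemma P_catV s t g : P (s ++ t) g -> exists a b, [/\ P s a, P t b & g = mul a b].
Proof.
elim: s g => [|n s IH] g /=; first by move=> Pg; exists one, g; rewrite mul1g.
move=> [u [c [Uu Pc ->]]]; have [a [b [Pa Pb ->]]] := IH _ Pc.
exists (mul u a), b; split; [by exists u, a|exact: Pb|by rewrite mulA].
Qed.

Lemma chain k : forall s m g, (size s <= k)%N -> sumw s <= w m.+1 -> P s g -> U m g.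
Proof.
elim: k => [|k IH] s m g.
  by rewrite leqn0 => /nilP -> _ /= ->; apply: U1.
move=> sk hs Pg.
case: (eqVneq s [::]) => [s0|sn0].
  by move: Pg; rewrite s0 /= => ->; apply: U1.
have S0 := sumw_gt0 sn0.
have c1 : 0 <= sumw s / 2 by lra.
have c2 : sumw s / 2 < sumw s by lra.
have [s1 [n [s2 [es h1 h2]]]] := split_seq c1 c2.
have hs2 : sumw s = sumw s1 + w n + sumw s2 by rewrite es sumw_cat /=; lra.
have wnS : w n <= sumw s by have := sumw_ge0 s1; have := sumw_ge0 s2; lra.
have wm2 := wS m.+1.
move: Pg; rewrite es => /P_catV [a [c [Pa [u [b [Uu Pb ->]]] ->]]].
have sz : size s = (size s1 + (size s2).+1)%N by rewrite es size_cat.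
apply: Ucube.
- apply: (IH s1) Pa; first by move: sk; rewrite sz; lia.
  rewrite wm2; lra.
- apply: (Umono (w_mono (le_trans wnS hs))) Uu.
- apply: (IH s2) Pb; first by move: sk; rewrite sz; lia.
  rewrite wm2; lra.
Qed.

Definition NS g := [set r : R | exists2 s, P s g & r = sumw s].
Definition N g := inf (NS g).

Lemma NS0 g : NS g !=set0.
Proof.
exists (sumw [:: 0%N]); exists [:: 0%N] => //=.
by exists g, one; split; rewrite ?mulg1.
Qed.

Lemma NSL g : has_lbound (NS g).
Proof. by exists 0 => r [s _ ->]; apply: sumw_ge0. Qed.

Lemma N0 g : 0 <= N g.
Proof. by apply: lb_le_inf (NS0 g) _ => r [s _ ->]; apply: sumw_ge0. Qed.

Lemma N1 : N one = 0.
Proof.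
apply/eqP; rewrite eq_le N0 andbT.
by apply: (ge_inf (NSL one)); exists [::].
Qed.

Lemma Nadd g h : N (mul g h) <= N g + N h.
Proof.
apply: inf_add; [exact: NS0|exact: NS0|exact: NSL|exact: NSL|].
move=> a b [s Ps ->] [t Pt ->]; rewrite -sumw_cat.
by apply: (ge_inf (NSL _)); exists (s ++ t) => //; apply: P_cat.
Qed.

Lemma Nopen e : open [set g | N g < e].
Proof.
rewrite openE => g /= hg.
have [r [s Ps ->] hr] := inf_lt (NS0 g) hg.
have es : 0 < e - sumw s by lra.
have [m hm] := w_small es.
have Hm : nbhs (mul (inv g) g) (U m) by rewrite mulVg.
have H : nbhs g [set y | U m (mul (inv g) y)] := @contL (inv g) g _ Hm.
apply: filterS H => y /= Uy.
have Py : P (s ++ [:: m]) y.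
  rewrite -(mulKVg g y); apply: P_cat => //=.
  by exists (mul (inv g) y), one; split; rewrite ?mulg1.
have hy : NS y (sumw (s ++ [:: m])) by exists (s ++ [:: m]).
have := ge_inf (NSL y) hy; rewrite /N /= sumw_cat /=; lra.
Qed.

Lemma Nsmall O : nbhs one O -> exists e, 0 < e /\ [set g | N g < e] `<=` O.
Proof.
move=> /Usmall [n hn]; exists (w n.+1); split; first exact: w_gt0.
move=> g /= hg; have [r [s Ps ->] hr] := inf_lt (NS0 g) hg.
apply: hn; apply: (chain (leqnn _) (ltW hr) Ps).
Qed.

End Kak.


Lemma cube W : nbhs one W ->
  exists V, nbhs one V /\ forall a b c, V a -> V b -> V c -> W (mul a (mul b c)).
Proof.
move=> /sq [V1 [n1 h1]]; have [V2 [n2 h2]] := sq n1.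
exists V2; split => // a b c Va Vb Vc; apply: h1; last exact: h2.
by rewrite -(mulg1 a); apply: h2 => //; apply: nbhs_singleton.
Qed.

Lemma U_exists : first_countable G -> exists U : nat -> set G,
  [/\ forall g, U 0%N g, forall n, nbhs one (U n),
      forall n a b c, U n.+1 a -> U n.+1 b -> U n.+1 c -> U n (mul a (mul b c)) &
      forall O, nbhs one O -> exists n, U n `<=` O].
Proof.
move=> fc; have [B [Bn Bs]] := fc one.
have step : forall W : set G, exists V : set G, nbhs one W ->
    nbhs one V /\ forall a b c, V a -> V b -> V c -> W (mul a (mul b c)).
  move=> W; case: (pselect (nbhs one W)) => h.
    by have [V hV] := cube h; exists V.
  by exists W.
have [F hF] := choice step.
pose U := fix U n := if n is k.+1 then F (U k `&` B k) else setT.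
have Unb : forall n, nbhs one (U n).
  elim => [|k IH] /=; first exact: filterT.
  exact: (hF _ (filterI IH (Bn k))).1.
exists U; split => //.
  move=> n a b c Ua Ub Uc; exact: ((hF _ (filterI (Unb n) (Bn n))).2 a b c Ua Ub Uc).1.
move=> O /Bs [n hn]; exists n.+1 => a Ua.
apply: hn.
have : (U n `&` B n) (mul a (mul one one)).
  exact: (hF _ (filterI (Unb n) (Bn n))).2 a one one Ua (nbhs_singleton (Unb n.+1)) (nbhs_singleton (Unb n.+1)).
by rewrite !mulg1 => -[].
Qed.


Section SR.
Variable f : G -> R.
Hypothesis f0 : forall g, 0 <= f g.
Hypothesis f1 : f one = 0.
Hypothesis fadd : forall g h, f (mul g h) <= f g + f h.
Hypothesis fopen : forall e, open [set g | f g < e].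
Hypothesis fsmall : forall O, nbhs one O -> exists e, 0 < e /\ [set g | f g < e] `<=` O.

Let A1 : [set one] !=set0. Proof. by exists one. Qed.
Definition f' g := cdist (dd f) [set one] g.
Let V e := qball_set (dd f) [set one] e.

Lemma V_iff e y : V e y <-> f y < e.
Proof.
split; first by move=> [a -> ]; rewrite /dd inv1 mul1g.
by move=> h; exists one => //; rewrite /dd inv1 mul1g.
Qed.

Lemma f'cont : continuous f'.
Proof. exact: (dd_cdist f0 f1 fadd fopen A1). Qed.

Lemma f'0 g : 0 <= f' g.
Proof. exact: (cd_ge0 f0 A1). Qed.

Lemma f'1 : f' one = 0.
Proof.
apply/eqP; rewrite eq_le f'0 andbT.
apply/ler_addgt0Pr => e e0; rewrite add0r.
apply: (ge_inf (SL _ _ _)); split => //.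
by apply: subset_closure; apply/V_iff; rewrite f1.
Qed.

Lemma clos_add a b g h : closure (V a) g -> closure (V b) h -> closure (V (a + b)) (mul g h).
Proof.
move=> ca cb.
have step : forall v, V a v -> closure (V (a + b)) (mul v h).
  move=> v /V_iff va; apply: (clos_map (@contL v) cb) => s /V_iff sb.
  apply/V_iff; apply: le_lt_trans (fadd _ _) _; lra.
have := clos_map (T := closure (V (a + b))) (@contR h) ca step.
by rewrite -(closure_id _).1 //; apply: closed_closure.
Qed.

Lemma f'add g h : f' (mul g h) <= f' g + f' h.
Proof.
apply: inf_add; [exact: (SN f0 A1)|exact: (SN f0 A1)|exact: SL|exact: SL|].
move=> a b [a0 ca] [b0 cb]; apply: (ge_inf (SL _ _ _)); split; first lra.
exact: clos_add.
Qed.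

Lemma f'open e : open [set g | f' g < e].
Proof.
have -> : [set g | f' g < e] = f' @^-1` [set r | r < e] by [].
apply: open_comp; last exact: open_lt.
by move=> x _; apply: f'cont.
Qed.

Hypothesis sr : semiregular G.

Lemma f'small O : nbhs one O -> exists e, 0 < e /\ [set g | f' g < e] `<=` O.
Proof.
move=> /sr [U0 [nU hU]].
have [e [e0 he]] := fsmall nU.
exists (e / 2); split; first lra.
move=> g /= hg; apply: hU.
have [a [a0 ca] ha] := inf_lt (SN f0 A1 g) hg.
rewrite /interior /=.
have e2 : 0 < e / 2 by lra.
apply: filterS (dd_ball f1 fopen g e2) => y hy.
have := clos_map (T := U0) (@contR (mul (inv g) y)) ca.
rewrite mulKVg; apply => s /V_iff sa; apply: he => /=.
apply: le_lt_trans (fadd _ _) _; move: hy; rewrite /qball /dd /=; lra.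
Qed.

Lemma f'rc : qpm_right_continuous (dd f').
Proof.
move=> x y; rewrite /dd.
have h := continuous_comp (f := mul (inv x)) (g := f') (@contL (inv x) y) (@f'cont (mul (inv x) y)).
exact: h.
Qed.

End SR.


Lemma main : first_countable G ->
  (exists d : G -> G -> R,
      quasi_pseudometric d /\ left_invariant mul d /\
      generates_topology d /\ cdist_continuous d) /\
  (semiregular G ->
    exists d : G -> G -> R,
      quasi_pseudometric d /\ left_invariant mul d /\
      generates_topology d /\ cdist_continuous d /\ qpm_right_continuous d).
Proof.
move=> fc; have [U [U0 Unb Ucube Usmall]] := U_exists fc.
pose f := N U.
have f0 : forall g, 0 <= f g by move=> g; apply: N0; assumption.
have f1 : f one = 0 by apply: N1; assumption.
have fadd : forall g h, f (mul g h) <= f g + f h by move=> g h; apply: Nadd; assumption.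
have fopen : forall e, open [set g | f g < e] by move=> e; apply: Nopen; assumption.
have fsmall : forall O, nbhs one O -> exists e, 0 < e /\ [set g | f g < e] `<=` O.
  by move=> O hO; apply: Nsmall; assumption.
split.
  exists (dd f); split; first exact: dd_qpm.
  split; first exact: dd_linv.
  split; first exact: dd_gen.
  exact: dd_cdist.
move=> sr.
have g0 := f'0 f0.
have g1 := f'1 f0 f1.
have gadd := f'add f0 fadd.
have gopen := f'open f0 f1 fadd fopen.
have gsmall := f'small f0 f1 fadd fopen fsmall sr.
exists (dd (f' f)); split; first exact: dd_qpm.
split; first exact: dd_linv.
split; first exact: dd_gen.
split; first exact: dd_cdist.
exact: f'rc.
Qed.

End Grp.

Theorem corollary7p6 (R : realType) (G : topologicalType)
    (mul : G -> G -> G) (one : G) (inv : G -> G) :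
  paratopological_group mul one inv -> first_countable G ->
  (exists d : G -> G -> R,
      quasi_pseudometric d /\ left_invariant mul d /\
      generates_topology d /\ cdist_continuous d) /\
  (semiregular G ->
    exists d : G -> G -> R,
      quasi_pseudometric d /\ left_invariant mul d /\
      generates_topology d /\ cdist_continuous d /\ qpm_right_continuous d).
Proof.
move=> [[mulA [mul1g [mulg1 [mulVg mulgV]]]] mulC].
exact: (main mulA mul1g mulg1 mulVg mulgV mulC).
Qed.
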